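(* Consider any run of Algorithm 1 (described in the context) under the standing assumption. Then: (i) if $k\in\mathcal{B}\cap\mathcal{S}$, then $f_k-f_{k+1}\ge\tfrac{\eta}{2}\epsilon_H\delta_k^2$; (ii) if $k\in\mathcal{I}\cap\mathcal{S}$, then \[ f_k-f_{k+1}\ \ge\ \tfrac{\eta}{2(1+2L_H)}\min\big\{\|g_{k+1}\|^2\epsilon_H^{-1},\ \epsilon_H^3\big\}. \]
   Context: Let $f:\mathbb{R}^n\to\mathbb{R}$ with gradient $g=\nabla f$ and Hessian $H=\nabla^2 f$; $\|\cdot\|$ is the Euclidean norm and $\lambda_{\min}(\cdot)$ the smallest eigenvalue of a symmetric matrix. Write $f_k=f(x_k)$, $g_k=g(x_k)$, $H_k=H(x_k)$ and $m_k(x):=f_k+g_k^T(x-x_k)+\tfrac12(x-x_k)^TH_k(x-x_k)$. Algorithm 1 (exact trust-region Newton method). Inputs: tolerances $\epsilon_g,\epsilon_H>0$; parameters $\gamma_1\in(0,1)$, $\gamma_2\in[1,\infty)$, $\psi\in(1/\gamma_2,1]$; $x_0\in\mathbb{R}^n$; $\delta_0>0$; $\delta_{\max}\ge\delta_0$; $\eta\in(0,1)$. For $k=0,1,2,\dots$: evaluate $g_k,H_k$; if $\|g_k\|\le\epsilon_g$, compute $\lambda_k=\lambda_{\min}(H_k)$ and, if $\lambda_k\ge-\epsilon_H$, return $x_k$ (terminate). Otherwise compute $s_k$ as a global solution of $\min_{s}\ m_k(x_k+s)+\tfrac12\epsilon_H\|s\|^2$ subject to $\|s\|\le\delta_k$.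 Set $\rho_k=\frac{f_k-f(x_k+s_k)}{m_k(x_k)-m_k(x_k+s_k)}$. If $\rho_k\ge\eta$: $x_{k+1}=x_k+s_k$, and $\delta_{k+1}=\min\{\gamma_2\delta_k,\delta_{\max}\}$ if $\|s_k\|\ge\psi\delta_k$, else $\delta_{k+1}=\delta_k$. If $\rho_k<\eta$: $x_{k+1}=x_k$ and $\delta_{k+1}=\gamma_1\|s_k\|$. $\mathcal{K}$ is the set of indices $k$ such that iteration $k$ is completed without termination; $\mathcal{S}=\{k\in\mathcal{K}:\rho_k\ge\eta\}$, $\mathcal{I}=\{k\in\mathcal{K}:\|s_k\|<\delta_k\}$, $\mathcal{B}=\{k\in\mathcal{K}:\|s_k\|=\delta_k\}$. Standing assumption: the sequence $\{f_k\}$ is bounded below by some $f_{\rm low}\in\mathbb{R}$, and all segments $[x_k,x_k+s_k]$ lie in an open set on which $f$ is twice continuously differentiable with gradient Lipschitz continuous with constant $L_g>0$ and Hessian Lipschitz continuous with constant $L_H>0$. *)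

(* Defs.v *)
From HB Require Import structures.
From mathcomp Require Import all_boot all_order all_algebra.
From mathcomp Require Import all_classical all_reals all_analysis.

Set Implicit Arguments.
Unset Strict Implicit.
Unset Printing Implicit Defensive.

Import Order.TTheory GRing.Theory Num.Theory.
Import numFieldNormedType.Exports.

Local Open Scope classical_set_scope.
Local Open Scope ring_scope.

Section Alg1Defs.
Variables (R : realType) (n : nat).
Local Notation vec := 'rV[R]_n.
Local Notation mat := 'M[R]_n.

Definition dotv (u v : vec) : R := \sum_(i < n) u 0 i * v 0 i.
Definition enorm (u : vec) : R := Num.sqrt (dotv u u).

Definition quadf (A : mat) (s : vec) : R := (s *m A *m s^T) 0 0.

Definition mxv (A : mat) (v : vec) : vec := (A *m v^T)^T.

Definition is_lambda_min (A : mat) (l : R) : Prop :=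
  eigenvalue A l /\ forall m, eigenvalue A m -> l <= m.

Definition segment (x y : vec) : set vec :=
  [set z | exists t : R, 0 <= t <= 1 /\ z = x + t *: (y - x)].

Definition C2_on (U : set vec) (f : vec -> R) (g : vec -> vec) (H : vec -> mat)
  : Prop :=
  forall x, U x ->
    [/\ differentiable f x, (forall v, 'd f x v = dotv (g x) v),
        differentiable g x & (forall v, 'd g x v = mxv (H x) v)] /\
    {for x, continuous H} /\ (H x)^T = H x.

Definition grad_lipschitz_on (U : set vec) (g : vec -> vec) (Lg : R) : Prop :=
  forall x y, U x -> U y -> enorm (g x - g y) <= Lg * enorm (x - y).

(* ||H x - H y||_2 <= LH ||x - y||, with the spectral (Euclidean operator) norm
   written out: ||(H x - H y) v|| <= LH ||x - y|| ||v|| for all v. *)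
Definition hess_lipschitz_on (U : set vec) (H : vec -> mat) (LH : R) : Prop :=
  forall x y v, U x -> U y ->
    enorm (mxv (H x - H y) v) <= LH * enorm (x - y) * enorm v.

Definition model (f : vec -> R) (g : vec -> vec) (H : vec -> mat) (x s : vec) : R :=
  f x + dotv (g x) s + 1 / 2 * quadf (H x) s.

Definition terminates (g : vec -> vec) (H : vec -> mat) (eps_g eps_H : R) (x : vec)
  : Prop :=
  enorm (g x) <= eps_g /\ (forall l, is_lambda_min (H x) l -> - eps_H <= l).

Definition inK (g : vec -> vec) (H : vec -> mat) (eps_g eps_H : R)
  (x : nat -> vec) (k : nat) : Prop :=
  forall j, (j <= k)%N -> ~ terminates g H eps_g eps_H (x j).

Definition tr_solution (f : vec -> R) (g : vec -> vec) (H : vec -> mat)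
  (eps_H : R) (x : vec) (delta : R) (s : vec) : Prop :=
  enorm s <= delta /\
  forall s', enorm s' <= delta ->
    model f g H x s + 1 / 2 * eps_H * enorm s ^+ 2
      <= model f g H x s' + 1 / 2 * eps_H * enorm s' ^+ 2.

Definition rho (f : vec -> R) (g : vec -> vec) (H : vec -> mat) (x s : vec) : R :=
  (f x - f (x + s)) / (model f g H x 0 - model f g H x s).

Definition alg1_step (f : vec -> R) (g : vec -> vec) (H : vec -> mat)
  (eps_H gamma1 gamma2 psi dmax eta : R)
  (x s : nat -> vec) (delta : nat -> R) (k : nat) : Prop :=
  tr_solution f g H eps_H (x k) (delta k) (s k) /\
  (if eta <= rho f g H (x k) (s k) then
     x k.+1 = x k + s k /\
     delta k.+1 = (if psi * delta k <= enorm (s k)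
                   then Num.min (gamma2 * delta k) dmax else delta k)
   else
     x k.+1 = x k /\ delta k.+1 = gamma1 * enorm (s k)).

End Alg1Defs.

(* Main.v *)
Require Import Defs.
From HB Require Import structures.
From mathcomp Require Import all_boot all_order all_algebra.
From mathcomp Require Import all_classical all_reals all_analysis.
From mathcomp Require Import lra ring.
Import Order.TTheory GRing.Theory Num.Theory.
Import numFieldNormedType.Exports.
Local Open Scope classical_set_scope.
Local Open Scope ring_scope.

Section H.
Variables (R : realType) (n : nat).
Local Notation vec := 'rV[R]_n.
Implicit Types (u v w : vec) (A B : 'M[R]_n).

Lemma dotvC u v : dotv u v = dotv v u.
Proof. by apply: eq_bigr => i _; rewrite mulrC. Qed.
Lemma dotvDl u v w : dotv (u + v) w = dotv u w + dotv v w.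
Proof. by rewrite /dotv -big_split; apply: eq_bigr => i _; rewrite mxE mulrDl. Qed.
Lemma dotvZl (a : R) u w : dotv (a *: u) w = a * dotv u w.
Proof. by rewrite /dotv mulr_sumr; apply: eq_bigr => i _; rewrite mxE mulrA. Qed.
Lemma dotvNl u w : dotv (- u) w = - dotv u w.
Proof. by rewrite -scaleN1r dotvZl mulN1r. Qed.
Lemma dotvBl u v w : dotv (u - v) w = dotv u w - dotv v w.
Proof. by rewrite dotvDl dotvNl. Qed.
Lemma dotvDr u v w : dotv w (u + v) = dotv w u + dotv w v.
Proof. by rewrite !(dotvC w) dotvDl. Qed.
Lemma dotvZr (a : R) u w : dotv w (a *: u) = a * dotv w u.
Proof. by rewrite !(dotvC w) dotvZl. Qed.
Lemma dotvBr u v w : dotv w (u - v) = dotv w u - dotv w v.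
Proof. by rewrite !(dotvC w) dotvBl. Qed.
Lemma dotv0r w : dotv w 0 = 0.
Proof. by rewrite -(scale0r 0) dotvZr mul0r. Qed.
Lemma dotv_ge0 u : 0 <= dotv u u.
Proof. by apply: sumr_ge0 => i _; rewrite -expr2 sqr_ge0. Qed.
Lemma dotv_eq0 u : dotv u u = 0 -> u = 0.
Proof.
move=> /eqP; rewrite psumr_eq0 => [/allP H|i _]; last by rewrite -expr2 sqr_ge0.
apply/matrixP => i j; rewrite mxE (ord1 i).
have := H j (mem_index_enum j); rewrite /= -expr2 sqrf_eq0 => /eqP //.
Qed.
Lemma enorm_ge0 u : 0 <= enorm u.
Proof. exact: sqrtr_ge0. Qed.
Lemma enorm_sqr u : enorm u ^+ 2 = dotv u u.
Proof. by rewrite sqr_sqrtr // dotv_ge0. Qed.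
Lemma enorm0 : enorm (0 : vec) = 0.
Proof. by rewrite /enorm dotv0r sqrtr0. Qed.
Lemma enorm_le u (d : R) : 0 <= d -> dotv u u <= d ^+ 2 -> enorm u <= d.
Proof. move=> d0 h; rewrite /enorm -(ger0_norm d0) -sqrtr_sqr ler_sqrt // sqr_ge0 //. Qed.
Lemma enormZ (c : R) u : enorm (c *: u) = `|c| * enorm u.
Proof. by rewrite /enorm dotvZl dotvZr mulrA -expr2 sqrtrM ?sqr_ge0 // sqrtr_sqr. Qed.

Lemma CS u v : dotv u v ^+ 2 <= dotv u u * dotv v v.
Proof.
have [v0|] := eqVneq (dotv v v) 0.
  by rewrite (dotv_eq0 v v0) dotv0r dotv0r expr0n /= mulr0.
move=> cn0; have cp : 0 < dotv v v by rewrite lt_neqAle eq_sym cn0 dotv_ge0.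
have := dotv_ge0 (dotv v v *: u - dotv u v *: v).
rewrite !(dotvBl, dotvBr, dotvZl, dotvZr) (dotvC v u) => h.
have : 0 <= dotv v v * (dotv u u * dotv v v - dotv u v ^+ 2) by nra.
by rewrite pmulr_rge0 // subr_ge0.
Qed.
Lemma CSabs u v : `|dotv u v| <= enorm u * enorm v.
Proof.
have := CS u v; rewrite -!enorm_sqr -exprMn -real_normK ?num_real // => h.
by rewrite -(ler_pXn2r (n:=2)) // ?nnegrE ?mulr_ge0 ?enorm_ge0.
Qed.

Lemma mxvD A u v : mxv A (u + v) = mxv A u + mxv A v.
Proof. by rewrite /mxv linearD /= mulmxDr linearD. Qed.
Lemma mxvZ A (c : R) u : mxv A (c *: u) = c *: mxv A u.
Proof. by rewrite /mxv linearZ /= -scalemxAr linearZ. Qed.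
Lemma mxvB A u v : mxv A (u - v) = mxv A u - mxv A v.
Proof. by rewrite -scaleN1r mxvD mxvZ scaleN1r. Qed.
Lemma mxvBl A B u : mxv (A - B) u = mxv A u - mxv B u.
Proof. by rewrite /mxv mulmxBl linearB. Qed.
Lemma dotv_mxv u A v : dotv u (mxv A v) = (u *m A *m v^T) 0 0.
Proof.
rewrite -mulmxA /dotv mxE; apply: eq_bigr => i _; by rewrite /mxv !mxE.
Qed.
Lemma quadfE A u : quadf A u = dotv u (mxv A u).
Proof. by rewrite dotv_mxv. Qed.
Lemma mxv_sym A u v : A^T = A -> dotv u (mxv A v) = dotv v (mxv A u).
Proof.
move=> hA; rewrite !dotv_mxv -[in RHS]hA.
transitivity (((u *m A *m v^T)^T) 0 0); first by rewrite [RHS]mxE.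
by rewrite !trmx_mul trmxK mulmxA.
Qed.

Lemma small_t (a b c d : R) : 0 <= c -> a < d ->
  exists2 t0 : R, 0 < t0 & forall t, 0 < t <= t0 -> a - 2 * t * b + t ^+ 2 * c <= d.
Proof.
move=> c0 ad.
have k0 : 0 < 2 * `|b| + c + 1 by have := normr_ge0 b; lra.
exists (Num.min 1 ((d - a) / (2 * `|b| + c + 1))).
  by rewrite lt_min ltr01 divr_gt0 // subr_gt0.
move=> t /andP[t0]; rewrite le_min => /andP[t1].
rewrite ler_pdivlMr // => ht.
have hb : - b <= `|b| by rewrite -normrN ler_norm.
have : t ^+ 2 * c <= t * c by have := mulr_ge0 (ltW t0) c0; rewrite expr2; nra.
have : t * (- b) <= t * `|b| by rewrite ler_pM2l.
nra.
Qed.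

Lemma quad_nonpos (c q t0 : R) : 0 < t0 ->
  (forall t, 0 < t <= t0 -> t * c <= t ^+ 2 * q) -> c <= 0.
Proof.
move=> t00 h; rewrite leNgt; apply/negP => c0.
have k0 : 0 < 2 * (`|q| + 1) by have := normr_ge0 q; lra.
pose t := Num.min t0 (c / (2 * (`|q| + 1))).
have tp : 0 < t by rewrite lt_min t00 divr_gt0.
have tt0 : t <= t0 by rewrite /t ge_min lexx.
have := h t; rewrite tp tt0 /= => /(_ isT).
have ht : t * (2 * (`|q| + 1)) <= c by rewrite -ler_pdivlMr // /t ge_min lexx orbT.
have hq : q <= `|q| by rewrite ler_norm.
rewrite expr2 -mulrA ler_pM2l // => hc.
have : t * q <= t * `|q| by rewrite ler_pM2l.
nra.
Qed.

Lemma ratio_ge (eta a D : R) : 0 < eta -> 0 <= D -> eta <= a / D -> 0 < D /\ eta * D <= a.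
Proof.
move=> e0 D0; have [->|Dn0] := eqVneq D 0.
  by rewrite invr0 mulr0 => h; lra.
have Dp : 0 < D by rewrite lt_neqAle eq_sym Dn0.
by rewrite ler_pdivlMr.
Qed.

Lemma final_alg (e L sig G2 : R) : 0 < e -> 0 < L -> 0 <= sig -> 0 <= G2 ->
  G2 <= (L * sig ^+ 2 + e * sig) ^+ 2 ->
  Num.min (G2 / e) (e ^+ 3) <= (1 + 2 * L) * e * sig ^+ 2.
Proof.
move=> e0 L0 s0 G0 hG.
have [se|se] := leP e sig.
  rewrite ge_min; apply/orP; right.
  have : e ^+ 2 <= sig ^+ 2 by rewrite ler_pXn2r // ?nnegrE ltW.
  rewrite exprSr; nra.
have [h1|h1] := leP (L * sig ^+ 2 + e * sig) (e ^+ 2).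
  rewrite ge_min; apply/orP; left; rewrite ler_pdivrMr //.
  apply: (le_trans hG).
  have -> : (L * sig ^+ 2 + e * sig) ^+ 2 = sig ^+ 2 * (L * sig + e) ^+ 2 by ring.
  have : (L * sig + e) ^+ 2 <= (1 + 2 * L) * e ^+ 2.
    have : L * (L * sig ^+ 2 + 2 * sig * e) <= L * (e ^+ 2 + e * sig) by rewrite ler_pM2l //; nra.
    nra.
  move=> h2; have := sqr_ge0 sig; nra.
rewrite ge_min; apply/orP; right.
have : (1 + 2 * L) * e * sig ^+ 2 - e ^+ 3 = e * ((sig - e) ^+ 2 + 2 * (L * sig ^+ 2 + e * sig - e ^+ 2)) by ring.
have := sqr_ge0 (sig - e).
nra.
Qed.
Lemma deriv_h (g : vec -> vec) (Hf : vec -> 'M[R]_n) (x s w : vec) (t : R) :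
  differentiable g (x + t *: s) -> 'd g (x + t *: s) s = mxv (Hf (x + t*:s)) s ->
  is_derive t 1 (fun t => dotv w (g (x + t *: s))) (dotv w (mxv (Hf (x+t*:s)) s)).
Proof.
move=> dg dgE.
pose G := fun u : R => g (x + u *: s).
have eqq : (fun h : R => h^-1 *: ((G \o shift t) (h *: 1) - G t)) =
   (fun h : R => h^-1 *: ((g \o shift (x + t *: s)) (h *: s) - g (x + t *: s))).
  apply/funext => h /=; rewrite /G; congr (_ *: (g _ - _)).
  by rewrite [h%:A]mulr1 scalerDl addrCA.
have derG : derivable G t 1 by rewrite /derivable eqq; exact: diff_derivable.
have DG : 'D_1 G t = mxv (Hf (x + t *: s)) s.
  by rewrite /derive eqq -/(derive g (x + t *: s) s) deriveE.
have coord : forall i, is_derive t 1 (fun r : R => G r 0 i) (mxv (Hf (x + t *: s)) s 0 i).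
  move=> i; apply: DeriveDef; first by move/derivable_mxP: derG; apply.
  by rewrite -DG derive_mx // mxE.
have -> : (fun t => dotv w (g (x + t *: s))) = \sum_(i < n) (fun r : R => w 0 i *: G r 0 i).
  by apply/funext => r; rewrite fct_sumE /dotv.
have -> : dotv w (mxv (Hf (x + t *: s)) s) = \sum_(i < n) w 0 i *: mxv (Hf (x + t *: s)) s 0 i by [].
apply: is_derive_sum => i.
Qed.
End H.


Arguments dotvC {R n}.
Arguments dotvDl {R n}.
Arguments dotvZl {R n}.
Arguments dotvNl {R n}.
Arguments dotvBl {R n}.
Arguments dotvDr {R n}.
Arguments dotvZr {R n}.
Arguments dotvBr {R n}.
Arguments dotv0r {R n}.
Arguments dotv_ge0 {R n}.
Arguments dotv_eq0 {R n}.
Arguments enorm_ge0 {R n}.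
Arguments enorm_sqr {R n}.
Arguments enorm0 {R n}.
Arguments enorm_le {R n}.
Arguments enormZ {R n}.
Arguments CS {R n}.
Arguments CSabs {R n}.
Arguments mxvD {R n}.
Arguments mxvZ {R n}.
Arguments mxvB {R n}.
Arguments mxvBl {R n}.
Arguments dotv_mxv {R n}.
Arguments quadfE {R n}.
Arguments mxv_sym {R n}.
Arguments small_t {R}.
Arguments quad_nonpos {R}.
Arguments ratio_ge {R}.
Arguments final_alg {R}.
Arguments deriv_h {R n}.
Section H2.
Variables (R : realType) (n : nat).
Local Notation vec := 'rV[R]_n.
Lemma first_order (f : vec -> R) (g : vec -> vec) (Hf : vec -> 'M[R]_n) (eps : R) x
  (delta : R) s : (Hf x)^T = Hf x -> 0 < eps ->
  tr_solution f g Hf eps x delta s -> enorm s < delta ->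
  g x + mxv (Hf x) s + eps *: s = 0.
Proof.
move=> hsym e0 [_ hmin] hlt.
pose w := g x + mxv (Hf x) s + eps *: s.
suff : dotv w w = 0 by move/dotv_eq0.
have hgen : forall (a b c : vec) (e : R) (w' : vec), dotv (a + b + e *: c) w' = dotv a w' + dotv b w' + e * dotv c w'.
  by move=> a b c e w'; rewrite !dotvDl dotvZl.
have hww : dotv w w = dotv (g x) w + dotv (mxv (Hf x) s) w + eps * dotv s w := hgen _ _ _ _ _.
rewrite (dotvC (mxv _ _) w) in hww.
have d0 : 0 <= delta by have := enorm_ge0 s; lra.
have hs : dotv s s < delta ^+ 2.
  by rewrite -enorm_sqr ltr_pXn2r // ?nnegrE ?enorm_ge0.
have [t0 t00 ht0] := small_t (dotv s s) (dotv s w) (dotv w w) (delta ^+ 2) (dotv_ge0 w) hs.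
have key : forall t, model f g Hf x (s - t *: w) + 1 / 2 * eps * enorm (s - t *: w) ^+ 2 =
   model f g Hf x s + 1 / 2 * eps * enorm s ^+ 2 - t * dotv w w
   + t ^+ 2 * (1 / 2 * (dotv w (mxv (Hf x) w) + eps * dotv w w)).
  move=> t; rewrite /model !quadfE !enorm_sqr !(mxvB, mxvZ, dotvBl, dotvBr, dotvZl, dotvZr).
  by rewrite (mxv_sym (Hf x) s w hsym) (dotvC w s) hww; field.
apply/eqP; rewrite eq_le; apply/andP; split; last exact: dotv_ge0.
apply: (quad_nonpos (dotv w w) (1 / 2 * (dotv w (mxv (Hf x) w) + eps * dotv w w)) t0 t00) => t ht.
have := hmin (s - t *: w).
rewrite key.
have -> : (enorm (s - t *: w) <= delta) = true.
  apply: enorm_le => //; rewrite !(dotvBl, dotvBr, dotvZl, dotvZr) (dotvC w s).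
  have := ht0 t ht; lra.
move=> /(_ isT); lra.
Qed.
Lemma taylor_bound (U : set vec) (f : vec -> R) (g : vec -> vec) (Hf : vec -> 'M[R]_n)
  (LH : R) x s w : 0 <= LH ->
  segment x (x + s) `<=` U -> C2_on U f g Hf -> hess_lipschitz_on U Hf LH ->
  dotv w (g (x + s) - g x - mxv (Hf x) s) <= enorm w * (LH * enorm s ^+ 2).
Proof.
move=> L0 hseg hC2 hL.
have inU : forall t : R, 0 <= t <= 1 -> U (x + t *: s).
  move=> t ht; apply: hseg; exists t; split => //.
  by rewrite addrAC subrr add0r.
have hder : forall t : R, 0 <= t <= 1 ->
   is_derive t 1 (fun t => dotv w (g (x + t *: s))) (dotv w (mxv (Hf (x+t*:s)) s)).
  move=> t /inU /hC2 [[_ _ dg dgE] _]; exact: deriv_h.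
pose h := fun t => dotv w (g (x + t *: s)).
have cont : {within `[0, 1], continuous h}.
  apply: derivable_within_continuous => t; rewrite in_itv /= => ht.
  by have := hder t ht => hd; exact: ex_derive.
have hder' : forall t : R, t \in `]0, 1[%R -> is_derive t 1 h (dotv w (mxv (Hf (x+t*:s)) s)).
  by move=> t; rewrite in_itv /= => /andP[a b]; apply: hder; rewrite !ltW.
have [c c01 hc] := MVT_segment ler01 hder' cont.
move: c01; rewrite in_itv /= => c01.
move: hc; rewrite /h scale1r scale0r addr0 subr0 mulr1 => hc.
rewrite !dotvBr hc -dotvBr -mxvBl.
have xU : U x by have := inU 0; rewrite lexx ler01 scale0r addr0; apply.
have := hL (x + c *: s) x s (inU c c01) xU.
rewrite addrAC subrr add0r enormZ (ger0_norm (_ : 0 <= c)); last by case/andP: c01.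
move=> hb.
apply: (le_trans (ler_norm _)); apply: (le_trans (CSabs _ _)).
apply: ler_wpM2l; first exact: enorm_ge0.
apply: (le_trans hb).
have := enorm_ge0 s; case/andP: c01 => c0 c1 es.
rewrite expr2 mulrA ler_wpM2r // ler_wpM2l //.
by rewrite -{2}(mul1r (enorm s)) ler_wpM2r.
Qed.
End H2.

Theorem lemma2p3 (R : realType) (n : nat)
  (f : 'rV[R]_n -> R) (g : 'rV[R]_n -> 'rV[R]_n) (H : 'rV[R]_n -> 'M[R]_n)
  (eps_g eps_H gamma1 gamma2 psi delta0 dmax eta flow Lg LH : R)
  (U : set 'rV[R]_n) (x s : nat -> 'rV[R]_n) (delta : nat -> R) :
  0 < eps_g -> 0 < eps_H ->
  0 < gamma1 < 1 -> 1 <= gamma2 -> gamma2^-1 < psi <= 1 ->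
  0 < delta0 -> delta0 <= dmax -> 0 < eta < 1 ->
  delta 0%N = delta0 ->
  (* the algorithm: every completed iteration follows Algorithm 1 *)
  (forall k, inK g H eps_g eps_H x k ->
     alg1_step f g H eps_H gamma1 gamma2 psi dmax eta x s delta k) ->
  (* standing assumption *)
  (forall k, (forall j, (j < k)%N -> ~ terminates g H eps_g eps_H (x j)) ->
     flow <= f (x k)) ->
  open U ->
  (forall k, inK g H eps_g eps_H x k -> segment (x k) (x k + s k) `<=` U) ->
  C2_on U f g H ->
  0 < Lg -> grad_lipschitz_on U g Lg ->
  0 < LH -> hess_lipschitz_on U H LH ->
  forall k, inK g H eps_g eps_H x k ->
    eta <= rho f g H (x k) (s k) ->
    (enorm (s k) = delta k ->
       eta / 2 * eps_H * delta k ^+ 2 <= f (x k) - f (x k.+1)) /\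
    (enorm (s k) < delta k ->
       eta / (2 * (1 + 2 * LH)) *
         Num.min (enorm (g (x k.+1)) ^+ 2 / eps_H) (eps_H ^+ 3)
       <= f (x k) - f (x k.+1)).
Proof.
move=> eg0 eH0 g1 g2 psi1 d00 d0max eta01 hd0 halg hflow Uopen hseg hC2 Lg0 hLg LH0 hLH k hk hrho.
have eta0 : 0 < eta by case/andP: eta01.
have [htr hif] := halg k hk.
have [hle hmin0] := htr.
move: hif; rewrite hrho => -[hx1 _].
rewrite hx1.
move: hrho; rewrite /rho.
move=> hrho; set xk := x k in htr hle hmin0 hrho *; set sk := s k in htr hle hmin0 hrho *; set dk := delta k in htr hle hmin0 hrho *.
have es0 := enorm_ge0 sk.
have dk0 : 0 <= dk by lra.
have hmin := hmin0 0; rewrite enorm0 expr0n /= mulr0 addr0 in hmin.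
have {hmin}hmin := hmin dk0.
set D := model f g H xk 0 - model f g H xk sk.
have hD : 1 / 2 * eps_H * enorm sk ^+ 2 <= D by rewrite /D; lra.
have D0 : 0 <= D by apply: le_trans hD; apply: mulr_ge0; [apply: mulr_ge0 => //; lra | exact: sqr_ge0].
have [Dp hfD] := ratio_ge eta (f xk - f (xk + sk)) D eta0 D0 hrho.
have hmain : eta / 2 * eps_H * enorm sk ^+ 2 <= f xk - f (xk + sk).
  apply: le_trans hfD.
  have := ler_wpM2l (ltW eta0) hD.
  have -> : eta * (1 / 2 * eps_H * enorm sk ^+ 2) = eta / 2 * eps_H * enorm sk ^+ 2 by field.
  by [].
split.
  by move=> hs; rewrite -hs.
move=> hlt.
have xU : U xk.
  apply: (hseg k hk); exists 0; rewrite lexx ler01 scale0r addr0; split => //.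
have hsym := (hC2 xk xU).2.2.
have fo := @first_order R n f g H eps_H xk dk sk hsym eH0 htr hlt.
have gx : g xk = - (mxv (H xk) sk + eps_H *: sk).
  by apply/eqP; rewrite -addr_eq0 addrA fo.
pose w := g (xk + sk) + eps_H *: sk.
have ew : g (xk + sk) - g xk - mxv (H xk) sk = w.
  by rewrite gx opprK addrA addrAC addrK.
have tb := @taylor_bound R n U f g H LH xk sk w (ltW LH0) (hseg k hk) hC2 hLH.
rewrite ew in tb.
have ew0 := enorm_ge0 w.
have ewb : enorm w <= LH * enorm sk ^+ 2.
  rewrite -enorm_sqr in tb.
  have := mulr_ge0 (ltW LH0) (sqr_ge0 (enorm sk)).
  nra.
have gpE : g (xk + sk) = w - eps_H *: sk by rewrite /w addrK.
have hG2 : enorm (g (xk + sk)) ^+ 2 <= (LH * enorm sk ^+ 2 + eps_H * enorm sk) ^+ 2.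
  rewrite enorm_sqr gpE !(dotvBl, dotvBr, dotvZl, dotvZr) (dotvC sk w) -!enorm_sqr.
  have := CSabs w sk.
  have := ler_norm (- dotv w sk); rewrite normrN.
  move=> h1 h2.
  have h3 : - (eps_H * dotv w sk) <= eps_H * (enorm w * enorm sk).
    rewrite -mulrN ler_wpM2l //; [lra | lra].
  have h4 : enorm w + eps_H * enorm sk <= LH * enorm sk ^+ 2 + eps_H * enorm sk by lra.
  have h5 : (enorm w + eps_H * enorm sk) ^+ 2 <= (LH * enorm sk ^+ 2 + eps_H * enorm sk) ^+ 2.
    have p1 : 0 <= eps_H * enorm sk by apply: mulr_ge0 => //; lra.
    have p2 : 0 <= LH * enorm sk ^+ 2 by apply: mulr_ge0; [lra | exact: sqr_ge0].
    have p3 : 0 <= enorm w + eps_H * enorm sk by lra.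
    have p4 : 0 <= LH * enorm sk ^+ 2 + eps_H * enorm sk by lra.
    by rewrite ler_pXn2r ?nnegrE.
  apply: le_trans h5.
  have -> : (enorm w + eps_H * enorm sk) ^+ 2 = enorm w ^+ 2 + 2 * (eps_H * (enorm w * enorm sk)) + eps_H ^+ 2 * enorm sk ^+ 2 by ring.
  lra.
have hfin := final_alg eps_H LH (enorm sk) (enorm (g (xk + sk)) ^+ 2) eH0 LH0 es0 (sqr_ge0 _) hG2.
apply: le_trans hmain.
have K0 : 0 < 1 + 2 * LH by lra.
have := ler_wpM2l (_ : 0 <= eta / (2 * (1 + 2 * LH))) hfin.
have -> : eta / (2 * (1 + 2 * LH)) * ((1 + 2 * LH) * eps_H * enorm sk ^+ 2) = eta / 2 * eps_H * enorm sk ^+ 2.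
  by field; rewrite gt_eqF.
apply.
by apply: divr_ge0; lra.
Qed.
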